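(* Suppose the observation probability matrix $P=(p_{ij})$ is correctly specified and the weights are properly assigned, and let $R$ be any symmetric scoring function with a continuous distribution. For a test location $(i_\ast,j_\ast)$ with $(i_\ast,j_\ast)\mid\Omega_{\mathrm{obs}}\sim\mathrm{Unif}(\Omega^c_{\mathrm{obs}})$, the full conformal interval $\widehat{C}$ satisfies $$\mathbb{P}\{X_{i_\ast j_\ast}\in\widehat{C}(i_\ast,j_\ast)\}=\mathbb{P}\{X_{i_\ast j_\ast}\in\widehat{X}_{i_\ast j_\ast}\pm q^\ast_{i_\ast j_\ast}\widehat{\sigma}_{i_\ast j_\ast}\}=\mathbb{P}\{R_{i_\ast j_\ast}\le q^\ast_{i_\ast j_\ast}\}\le1-\alpha+\omega_{\max},$$ where $q^\ast_{i_\ast j_\ast}=\mathrm{Quantile}_{1-\alpha}\big(\sum_{k=1}^{n_{\mathrm{cal}}+1}\omega_{i_kj_k}\delta_{R_{i_kj_k}}\big)$ and $\omega_{\max}=\max_k\omega_{i_kj_k}$.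
   Context: $X\in\mathbb{R}^{d_1\times d_2}$ is fixed. Independent $Z_{ij}\sim\mathrm{Bern}(p_{ij})$ with nonzero $p_{ij}$ define the observed set $\Omega_{\mathrm{obs}}=\{Z_{ij}=1\}$. The calibration points $(i_1,j_1),\ldots,(i_{n_{\mathrm{cal}}},j_{n_{\mathrm{cal}}})$ are the observed indices retained for calibration (uncorrupted observed entries), and $(i_{n_{\mathrm{cal}}+1},j_{n_{\mathrm{cal}}+1})=(i_\ast,j_\ast)$ is the test point. Properly assigned weights: $\omega_{i_kj_k}=h_{i_kj_k}/\sum_{k'=1}^{n_{\mathrm{cal}}+1}h_{i_{k'}j_{k'}}$, $h_{ij}=(1-p_{ij})/p_{ij}$. $\widehat{X}$ and $\widehat{\sigma}_{ij}>0$ are estimates and the score is $R_{ij}=|X_{ij}-\widehat{X}_{ij}|/\widehat{\sigma}_{ij}$, computed symmetrically in the $n_{\mathrm{cal}}+1$ points. $\mathrm{Quantile}_{1-\alpha}(\mu)=\inf\{t:\mu((-\infty,t])\ge1-\alpha\}$ for a discrete probability measure $\mu$; $\delta_t$ is the point mass at $t$; $\widehat{C}(i_\ast,j_\ast)=[\widehat{X}_{i_\ast j_\ast}-q^\ast_{i_\ast j_\ast}\widehat{\sigma}_{i_\ast j_\ast},\widehat{X}_{i_\ast j_\ast}+q^\ast_{i_\ast j_\ast}\widehat{\sigma}_{i_\ast j_\ast}]$. *)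

(* Defs.v *)
From HB Require Import structures.
From mathcomp Require Import all_boot all_order all_algebra.
From mathcomp Require Import all_classical all_reals.
Set Implicit Arguments. Unset Strict Implicit. Unset Printing Implicit Defensive.
Import Order.TTheory GRing.Theory Num.Theory.
Local Open Scope ring_scope.
Local Open Scope classical_set_scope.

Definition idx (d1 d2 : nat) : finType := ('I_d1 * 'I_d2)%type.

(* Probability that Omega_obs = Om, under independent Z_ij ~ Bern(p_ij). *)
Definition probOmega {R : realType} {T : finType} (p : T -> R) (Om : {set T}) : R :=
  \prod_(x : T) (if x \in Om then p x else 1 - p x).

(* Joint mass of (Omega_obs, test point): Omega_obs from Bernoulli sampling,
   test point | Omega_obs ~ Unif(Omega_obs^c). *)
Definition jointMass {R : realType} {T : finType} (p : T -> R)
  (Om : {set T}) (t : T) : R :=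
  probOmega p Om * (if t \in Om then 0 else (#|~: Om|%:R)^-1).

(* Probability of an event, conditional on Omega_obs^c being nonempty
   (which is needed for the test point to exist). *)
Definition Prob {R : realType} {T : finType} (p : T -> R)
  (E : {set T} -> T -> bool) : R :=
  (\sum_(Om : {set T}) \sum_(t : T) jointMass p Om t * (E Om t)%:R) /
  (\sum_(Om : {set T}) \sum_(t : T) jointMass p Om t).

Definition Expect {R : realType} {T : finType} (p : T -> R)
  (f : {set T} -> T -> R) : R :=
  (\sum_(Om : {set T}) \sum_(t : T) jointMass p Om t * f Om t) /
  (\sum_(Om : {set T}) \sum_(t : T) jointMass p Om t).

Definition hw {R : realType} {T : finType} (p : T -> R) (x : T) : R :=
  (1 - p x) / p x.

(* Properly assigned weight of point a among the n_cal+1 points S. *)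
Definition weight {R : realType} {T : finType} (p : T -> R) (S : {set T}) (a : T) : R :=
  hw p a / \sum_(b in S) hw p b.

Definition wmax {R : realType} {T : finType} (p : T -> R) (S : {set T}) : R :=
  \big[Num.max/0]_(a in S) weight p S a.

Definition wcdf {R : realType} {T : finType} (p : T -> R) (S : {set T})
  (Rs : T -> R) (t : R) : R :=
  \sum_(a in S | Rs a <= t) weight p S a.

Definition wquantile {R : realType} {T : finType} (p : T -> R) (S : {set T})
  (Rs : T -> R) (alpha : R) : R :=
  inf [set t : R | 1 - alpha <= wcdf p S Rs t].

(* Score R_ij = |X_ij - Xhat_ij| / sigmahat_ij, where the estimates are
   computed symmetrically from the n_cal+1 points S (they depend on S only
   as a set; X is fixed so the data on S is determined by S). *)
Definition score {R : realType} {T : finType} (X : T -> R)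
  (Xhat sighat : {set T} -> T -> R) (S : {set T}) (x : T) : R :=
  `|X x - Xhat S x| / sighat S x.

Definition qstar {R : realType} {T : finType} (p : T -> R) (X : T -> R)
  (Xhat sighat : {set T} -> T -> R) (alpha : R) (Om : {set T}) (t : T) : R :=
  wquantile p (t |: Om) (score X Xhat sighat (t |: Om)) alpha.

Definition covered {R : realType} {T : finType} (p : T -> R) (X : T -> R)
  (Xhat sighat : {set T} -> T -> R) (alpha : R) (Om : {set T}) (t : T) : bool :=
  let S := t |: Om in
  let q := qstar p X Xhat sighat alpha Om t in
  (Xhat S t - q * sighat S t <= X t) && (X t <= Xhat S t + q * sighat S t).

(* Main.v *)
Require Import Defs.
From HB Require Import structures.
From mathcomp Require Import all_boot all_order all_algebra.
From mathcomp Require Import all_classical all_reals.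
From mathcomp Require Import ring lra.
Import Order.TTheory GRing.Theory Num.Theory.
Local Open Scope ring_scope.

Lemma qbound (R : realType) (T : finType) (S : {set T}) (w Rs : T -> R) (beta : R) :
  0 < beta -> (forall a, 0 <= Rs a) -> {in S &, injective Rs} ->
  \sum_(a in S | Rs a <= inf [set t : R | beta <= \sum_(a in S | Rs a <= t) w a]%classic) w a <= beta + \big[Num.max/0]_(a in S) w a.
Proof.
move=> hb hR hinj.
set q := inf _.
have hlb : has_lbound [set t : R | beta <= \sum_(a in S | Rs a <= t) w a]%classic.
  exists 0 => t /= ht; rewrite leNgt; apply/negP => tlt.
  move: ht; rewrite big1 ?leNgt ?hb // => a /andP[_ ha].
  by move: (hR a); lra.
have qle := ge_inf hlb.
rewrite (bigID (fun a => Rs a < q)) /=.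
apply: lerD.
  rewrite leNgt; apply/negP => hL.
  have ne : exists a, (a \in S) && (Rs a < q).
    case: (boolP [exists a, (a \in S) && (Rs a < q)]) => [/existsP //|].
    rewrite negb_exists => /forallP hn.
    move: hL; rewrite big1 ?ltNge ?(ltW hb) // => a /andP[/andP[aS _] aq].
    by move: (hn a); rewrite aS aq.
  case: ne => a0 /andP[a0S a0q].
  set t0 := \big[Num.max/0]_(a in S | Rs a < q) Rs a.
  have t0q : t0 < q.
    apply: (big_ind (fun x => x < q)).
    - by move: (hR a0); lra.
    - by move=> x y hx hy; rewrite gt_max hx hy.
    - by move=> a /andP[].
  have ht0 : forall a, a \in S -> (Rs a <= t0) = (Rs a < q).
    move=> a aS; apply/idP/idP => h.
      exact: le_lt_trans h t0q.
    rewrite /t0 (bigD1 a) /=; last by rewrite aS h.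
    by rewrite le_max lexx.
  have : q <= t0.
    apply: qle => /=.
    rewrite (eq_bigl (fun a => (a \in S) && (Rs a < q))).
      apply: ltW; apply: (lt_le_trans hL); rewrite le_eqVlt; apply/orP; left.
      apply/eqP; apply: eq_bigl => a /=.
      by case: (a \in S) => //=; case h: (Rs a < q); rewrite ?(ltW h) ?andbF.
    by move=> a /=; case aS: (a \in S) => //=; rewrite ht0.
  by rewrite leNgt t0q.
case: (boolP [exists a, (a \in S) && (Rs a == q)]).
  move=> /existsP[a0 /andP[a0S /eqP a0q]].
  rewrite (big_pred1 a0).
    by rewrite (bigD1 a0) //= le_max lexx.
  move=> a /=; apply/idP/idP.
    move=> /andP[/andP[aS h1] h2]; apply/eqP; apply: hinj => //.
    by rewrite a0q; apply/eqP; rewrite eq_le h1 leNgt.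
  by move=> /eqP ->; rewrite a0S a0q lexx ltxx.
rewrite negb_exists => /forallP hn.
rewrite [X in X <= _]big1.
  by elim/big_rec: _ => // i x _ hx; rewrite le_max hx orbT.
move=> a /andP[/andP[aS h1] h2].
by move: (hn a); rewrite aS eq_le h1 leNgt h2.
Qed.

Lemma setD11b {T : finType} (t : T) (S : {set T}) : t \notin S :\ t.
Proof. by rewrite setD11. Qed.

Lemma sum_mulc {R : realType} {T : finType} {S : {set T}} {w : T -> R} :
  \sum_(i in S) w i = 1 -> forall c, \sum_(i in S) w i * c = c.
Proof. by move=> h c; rewrite -big_distrl /= h mul1r. Qed.

Section Main.
Variables (R : realType) (T : finType) (p : T -> R).
Hypothesis hp : forall x, 0 < p x <= 1.

Lemma probOmega_ge0 Om : 0 <= probOmega p Om.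
Proof.
apply: prodr_ge0 => x _; case: (x \in Om); have := hp x; lra.
Qed.

Lemma hw_ge0 x : 0 <= hw p x.
Proof.
have := hp x => /andP[h1 h2]; rewrite /hw divr_ge0 //; [lra | exact: ltW].
Qed.

Lemma probOmega_D1 (S : {set T}) t : t \in S -> probOmega p (S :\ t) = probOmega p S * hw p t.
Proof.
move=> tS; rewrite /probOmega (bigD1 t) //= [in RHS](bigD1 t) //= setD11 tS.
rewrite (eq_bigr (fun x => if x \in S then p x else 1 - p x)); last first.
  by move=> x xt; rewrite in_setD1 xt.
have := hp t => /andP[h1 h2].
rewrite /hw; field; lra.
Qed.

Lemma card_CD1 (S : {set T}) t : t \in S -> #|~: (S :\ t)| = (#|~: S|).+1.
Proof.
move=> tS; rewrite finset.setCD finset.setUC cardsU1 finset.in_setC tS /=.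
by rewrite add1n.
Qed.


Variables (X : T -> R) (Xhat sighat : {set T} -> T -> R) (alpha : R).
Hypothesis halpha : 0 < alpha < 1.
Hypothesis hsig : forall S x, 0 < sighat S x.
Hypothesis hnotie : forall (Om : {set T}) (t : T),
     0 < probOmega p Om -> t \notin Om ->
     {in t |: Om &, injective (score X Xhat sighat (t |: Om))}.

Let F (S : {set T}) (t : T) : R :=
  ((score X Xhat sighat S t <= wquantile p S (score X Xhat sighat S) alpha)%R)%:R
  - (1 - alpha) - wmax p S.

Lemma perS (S : {set T}) :
  \sum_(t | t \in S) jointMass p (S :\ t) t * F S t <= 0.
Proof.
case: (boolP [exists t, (t \in S) && (0 < probOmega p (S :\ t))]); last first.
  rewrite negb_exists => /forallP hn.
  rewrite big1 // => t tS.
  have h0 : probOmega p (S :\ t) = 0.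
    have := probOmega_ge0 (S :\ t); move: (hn t); rewrite tS /= => h1 h2.
    by apply/eqP; rewrite eq_le h2 leNgt h1.
  by rewrite /jointMass h0 !mul0r.
move=> /existsP[t1 /andP[t1S pos]].
have inj := @hnotie _ t1 pos (setD11b t1 S); rewrite finset.setD1K // in inj.
set c := probOmega p S * ((#|~: S|).+1%:R)^-1.
have c0 : 0 <= c by rewrite mulr_ge0 ?probOmega_ge0 // invr_ge0 ler0n.
rewrite (eq_bigr (fun t => c * (hw p t * F S t))); last first.
  move=> t tS; rewrite /jointMass setD11 probOmega_D1 // card_CD1 //.
  by rewrite /c; ring.
rewrite -mulr_sumr; apply: mulr_ge0_le0 => //.
set H := \sum_(t in S) hw p t.
have hw1 : 0 < hw p t1.
  rewrite lt0r hw_ge0 andbT; apply/eqP => h.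
  by move: pos; rewrite probOmega_D1 // h mulr0 ltxx.
have H0 : 0 < H.
  rewrite /H (bigD1 t1) //=; apply: (lt_le_trans hw1); rewrite lerDl.
  by apply: sumr_ge0 => x _; exact: hw_ge0.
rewrite (eq_bigr (fun t => H * (weight p S t * F S t))); last first.
  move=> t _; rewrite /weight -/H; field; lra.
rewrite -mulr_sumr; apply: mulr_ge0_le0; first exact: ltW.
have sw : \sum_(t in S) weight p S t = 1.
  by rewrite /weight -mulr_suml -/H divff //; lra.
rewrite /F.
under eq_bigr do rewrite !mulrBr.
rewrite !sumrB !(sum_mulc sw).
set Rs := score X Xhat sighat S.
have hRs : forall a, 0 <= Rs a.
  by move=> a; rewrite /Rs /score divr_ge0 ?normr_ge0 // ltW.
have hb : 0 < 1 - alpha by case/andP: halpha => ? ?; lra.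
have := @qbound _ _ S (weight p S) Rs _ hb hRs inj.
rewrite -/(wcdf p S Rs _) -/(wquantile p S Rs alpha) -/(wmax p S).
suff -> : \sum_(i in S) weight p S i * ((Rs i <= wquantile p S Rs alpha)%R)%:R
   = wcdf p S Rs (wquantile p S Rs alpha) by lra.
rewrite /wcdf big_mkcondr /=; apply: eq_bigr => a _.
by case: (_ <= _); rewrite ?mulr1 ?mulr0.
Qed.


Lemma total_sum :
  \sum_(Om : {set T}) \sum_(t : T) jointMass p Om t * F (t |: Om) t <= 0.
Proof.
rewrite exchange_big /=.
have step : forall t, \sum_(Om : {set T}) jointMass p Om t * F (t |: Om) t
   = \sum_(S : {set T} | t \in S) jointMass p (S :\ t) t * F S t.
  move=> t.
  rewrite (bigID (fun Om : {set T} => t \in Om)) /= big1 ?add0r; last first.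
    by move=> Om tOm; rewrite /jointMass tOm mulr0 mul0r.
  rewrite (reindex_onto (fun S : {set T} => S :\ t) (fun Om => t |: Om)) /=;
    last by move=> Om tOm; rewrite finset.setU1K.
  apply: eq_big => S.
    rewrite setD11 /=; apply/eqP/idP => [h|tS]; first by rewrite -h setU11.
    exact: finset.setD1K.
  by move=> /andP[_ /eqP h]; rewrite h.
rewrite (eq_bigr _ (fun t _ => step t)).
rewrite (exchange_big_dep xpredT) //=.
by apply: sumr_le0 => S _; exact: perS.
Qed.

End Main.
Theorem lemma4 (R : realType) (d1 d2 : nat)
  (p : idx d1 d2 -> R) (X : idx d1 d2 -> R)
  (Xhat sighat : {set idx d1 d2} -> idx d1 d2 -> R) (alpha : R)
  (hp : forall x, 0 < p x <= 1)
  (hp1 : exists x, p x < 1)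
  (halpha : 0 < alpha < 1)
  (hsig : forall S x, 0 < sighat S x)
  (hnotie : forall (Om : {set idx d1 d2}) (t : idx d1 d2),
     0 < probOmega p Om -> t \notin Om ->
     {in t |: Om &, injective (score X Xhat sighat (t |: Om))}) :
  Prob p (covered p X Xhat sighat alpha)
    = Prob p (fun Om t => score X Xhat sighat (t |: Om) t
                            <= qstar p X Xhat sighat alpha Om t)
  /\ Prob p (fun Om t => score X Xhat sighat (t |: Om) t
                            <= qstar p X Xhat sighat alpha Om t)
     <= 1 - alpha + Expect p (fun Om t => wmax p (t |: Om)).
Proof.
split.
  congr (Prob p _); apply: funext => Om; apply: funext => t.
  rewrite /covered /score.
  have hs := hsig (t |: Om) t.
  rewrite ler_pdivrMr // ler_norml.
  by apply/andP/andP => -[h1 h2]; split; lra.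
have h := @total_sum R _ p hp X Xhat sighat alpha halpha hsig hnotie.
rewrite /Prob /Expect.
set D := \sum_(Om : {set idx d1 d2}) \sum_(t : idx d1 d2) jointMass p Om t.
have jm0 : forall Om t, 0 <= jointMass p Om t.
  move=> Om t; rewrite /jointMass mulr_ge0 ?probOmega_ge0 //.
  by case: ifP => _ //; rewrite invr_ge0 ler0n.
have D0 : 0 < D.
  case: hp1 => x hx.
  set Om0 := ~: [set x].
  have pos : 0 < jointMass p Om0 x.
    rewrite /jointMass finset.in_setC finset.in_set1 eqxx /= /Om0 finset.setCK cards1 invr1 mulr1.
    apply: prodr_gt0 => y _; case: ifP => hy; have := hp y => /andP[h1 h2] //.
    move: hy; rewrite finset.in_setC finset.in_set1 => /negbFE/eqP ->; lra.
  rewrite /D (bigD1 Om0) //= (bigD1 x) //= -addrA.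
  apply: (lt_le_trans pos); rewrite lerDl addr_ge0 //; apply: sumr_ge0 => *.
    exact: jm0.
  by apply: sumr_ge0 => *; exact: jm0.
rewrite ler_pdivrMr // mulrDl divfK ?gt_eqF // -subr_le0 opprD addrA.
rewrite /D mulr_sumr -!sumrB.
apply: le_trans h; rewrite le_eqVlt; apply/orP; left; apply/eqP.
apply: eq_bigr => Om _; rewrite mulr_sumr -!sumrB; apply: eq_bigr => t _.
ring.
Qed.
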